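(* Let $(X,d)$, $\mu$, $Y$ (countable), $f:X\to Y$ be as in the standing setting, fix an integer $K\ge2$, and let $\kappa:\mathbb{Z}^+\to\mathbb{Z}^+$ satisfy $\sum_{n=1}^\infty\rho^{\kappa(n)}=\infty$ for every $0<\rho\le1$. Let $\{z_n\}$ be generated by $\mathcal{S}(\kappa,\Phi)$ where $\Phi(x,S)=|V_S(x)|-\operatorname{modefreq}_f(V_S(x))$ with $V_S(x)$ the $K$-nearest neighbors of $x$ with respect to $S$. If $x\in X$ is contained in an $f$-contiguous component of positive $\mu$-measure, then $\zeta_n(x)\to f(x)$ with probability one.
   Context: Standing setting: $(X,d)$ metric space with probability measure $\mu$; $Y$ countable; $f:X\to Y$; $X_y=f^{-1}(y)$; $B_\epsilon(x)$ open ball; $\operatorname{supp}(\mu)=\{x:\mu(B_\epsilon(x))>0\ \forall\epsilon>0\}$. $b$ is an $f$-boundary point iff $\mu(B_\epsilon(b)\setminus X_{f(b)})>0$ for all $\epsilon>0$. $R\subseteq X$ is $f$-connected iff connected and $R\subseteq X_y$ for some $y$; $f$-contiguous iff $f$-connected, $R\subseteq\operatorname{supp}(\mu)$, and $R$ has no $f$-boundary points; an $f$-contiguous component is a maximal $f$-contiguous set. For finite $A$, $\operatorname{modefreq}_f(A)=\max_y|A\cap X_y|$ ($0$ if $A=\emptyset$). $K$-nearest neighbors: for finite $S\subseteq X$, let $\mathcal{V}_x$ be the family of $K$-element subsets $V\subseteq S$ minimizing distance to $x$ (i.e. no element outside $V$ is strictly closer to $x$ than some element of $V$); set $V_S(x)=\emptyset$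 if $x\in S$, and otherwise $V_S(x)=\arg\min_{V\in\mathcal{V}_x}\operatorname{modefreq}_f(V)$ (a minimizing set). Process $\mathcal{S}(\kappa,\Phi)$: $Z_0=\emptyset$; at step $n$ draw $\kappa(n)$ candidates i.i.d. from $\mu$, independent of the past; $z_n$ is a candidate maximizing $\Phi(\cdot,Z_{n-1})$ (ties uniformly at random); $Z_n=\{z_1,\dots,z_n\}$. Nearest neighbor prediction: $\zeta_n(x)=f(z_\iota)$, $\iota=\arg\min_{i\le n}d(x,z_i)$, ties uniformly at random. *)

(* Defs.v *)
From HB Require Import structures.
From mathcomp Require Import all_boot all_order all_algebra.
From mathcomp Require Import all_classical all_reals all_analysis.
Set Implicit Arguments. Unset Strict Implicit. Unset Printing Implicit Defensive.
Import Order.TTheory GRing.Theory Num.Theory.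
Local Open Scope classical_set_scope.
Local Open Scope ring_scope.

Section metric.
Context {R : realType} {X : pointedType}.
Variable dist : X -> X -> R.

Definition is_metric := [/\ (forall x y, dist x y = 0 <-> x = y),
  (forall x y, dist x y = dist y x) &
  (forall x y z, dist x z <= dist x y + dist y z)].

Definition mball (x : X) (e : R) : set X := [set y | dist x y < e].

Definition mopen (U : set X) : Prop :=
  forall x, U x -> exists2 e : R, 0 < e & mball x e `<=` U.

Definition mconnected (A : set X) : Prop :=
  forall U V : set X, mopen U -> mopen V -> A `<=` U `|` V ->
    A `&` U !=set0 -> A `&` V !=set0 -> A `&` U `&` V !=set0.

Variable mu : set X -> \bar R.
Variable Y : countType.
Variable f : X -> Y.

Definition supp : set X :=
  [set x | forall e : R, 0 < e -> (0 < mu (mball x e))%E].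

Definition fboundary (b : X) : Prop :=
  forall e : R, 0 < e -> (0 < mu (mball b e `\` f @^-1` [set f b]))%E.

Definition fconnected (A : set X) : Prop :=
  mconnected A /\ exists y : Y, A `<=` f @^-1` [set y].

Definition fcontiguous (A : set X) : Prop :=
  [/\ fconnected A, A `<=` supp & forall b, A b -> ~ fboundary b].

Definition fcomponent (A : set X) : Prop :=
  fcontiguous A /\ forall B, fcontiguous B -> A `<=` B -> B = A.

(* modefreq_f of a finite set (given duplicate-free as a seq); 0 if empty *)
Definition modefreq (V : seq X) : nat :=
  \max_(v <- V) count (fun w => f w == f v) V.

Definition powerseq (s : seq X) : seq (seq X) :=
  foldr (fun a acc => acc ++ map (cons a) acc) [:: [::]] s.

(* the family V_x of k-element subsets of S minimizing distance to x,
   k = min(K, |S|) *)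
Definition knn_family (K : nat) (x : X) (S : seq X) : seq (seq X) :=
  let S' := undup S in
  [seq V <- powerseq S' | (size V == minn K (size S')) &&
     all (fun v => all (fun s => (s \in V) || (dist x v <= dist x s)) S') V].

Definition argmin_seq {T : Type} (d : T) (F : T -> nat) (s : seq T) : T :=
  foldl (fun b a => if (F a < F b)%N then a else b) (head d s) (behead s).

Definition VS (K : nat) (x : X) (S : seq X) : seq X :=
  if x \in S then [::] else argmin_seq [::] modefreq (knn_family K x S).

Definition Phi (K : nat) (x : X) (S : seq X) : nat :=
  (size (VS K x S) - modefreq (VS K x S))%N.

(* choose an element of a finite list of ties uniformly at random,
   using a sample u uniform on [0,1) *)
Definition pick_tie {T : Type} (d : T) (u : R) (ties : seq T) : T :=
  nth d ties (minn (Num.truncn (u * (size ties)%:R)) (size ties).-1).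

(* one step of S(kappa,Phi): among candidates cs, pick a maximizer of score
   (ties uniformly at random via u) *)
Definition select (score : X -> nat) (cs : seq X) (u : R) : X :=
  let M := \max_(c <- cs) score c in
  pick_tie point u [seq c <- cs | score c == M].

(* Z_n = [z_1; ...; z_n], from candidate samples c n j (step n >= 1,
   j < kappa n) and tie-breaking samples u n *)
Fixpoint zs (K : nat) (kappa : nat -> nat) (c : nat -> nat -> X)
    (u : nat -> R) (n : nat) : seq X :=
  match n with
  | 0 => [::]
  | n'.+1 => let Z := zs K kappa c u n' in
      rcons Z (select (fun y => Phi K y Z) [seq c n j | j <- iota 0 (kappa n)] (u n))
  end.

(* nearest-neighbour prediction zeta_n(x), ties (among indices i <= n)
   broken uniformly at random via w *)
Definition nn_pred (x : X) (Z : seq X) (w : R) : Y :=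
  f (pick_tie point w [seq z <- Z | all (fun z' => dist x z <= dist x z') Z]).

End metric.

Notation Borel dist := (g_sigma_algebraType (mopen dist)).

(* Main.v *)
Require Import Defs.
From HB Require Import structures.
From mathcomp Require Import all_boot all_order all_algebra.
From mathcomp Require Import all_classical all_reals all_analysis.
From mathcomp Require Import ring lra.
Import Order.TTheory GRing.Theory Num.Theory.
Local Open Scope classical_set_scope.
Local Open Scope ring_scope.
Section det.
Context {R : realType} {X : pointedType}.
Variable dist : X -> X -> R.
Variable Y : countType.
Variable f : X -> Y.

Lemma max_attained (g : X -> nat) (cs : seq X) : cs != [::] ->
  exists2 c, c \in cs & g c = \max_(c <- cs) g c.
Proof.
elim: cs => [//|a s IH] _.
rewrite big_cons.
case: (eqVneq s [::]) => [->|sn].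
  by exists a; rewrite ?mem_head // big_nil maxn0.
have [c cs gc] := IH sn.
case: (leqP (g c) (g a)) => h.
  by exists a; rewrite ?mem_head // -gc (maxn_idPl h).
by exists c; rewrite ?inE ?cs ?orbT // -gc (maxn_idPr (ltnW h)).
Qed.

Lemma pick_tie_mem {T : eqType} (d : T) (u : R) (ties : seq T) :
  ties != [::] -> pick_tie d u ties \in ties.
Proof.
move=> tn; rewrite /pick_tie; apply: mem_nth.
have : (0 < size ties)%N by case: ties tn.
move=> h; apply: (leq_ltn_trans (geq_minr _ _)); by rewrite prednK.
Qed.

Lemma select_mem (score : X -> nat) (cs : seq X) (u : R) :
  cs != [::] -> select score cs u \in cs.
Proof.
move=> cn; rewrite /select.
have [c cin gc] := @max_attained score cs cn.
have : pick_tie point u [seq c0 <- cs | score c0 == \max_(c1 <- cs) score c1]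
   \in [seq c0 <- cs | score c0 == \max_(c1 <- cs) score c1].
  apply: pick_tie_mem; apply/eqP => h.
  have : c \in [seq c0 <- cs | score c0 == \max_(c1 <- cs) score c1].
    by rewrite mem_filter gc eqxx cin.
  by rewrite h.
by rewrite mem_filter => /andP[].
Qed.

Lemma zs_cand K kappa c u n z : (forall m, (0 < m)%N -> (0 < kappa m)%N) ->
  z \in zs dist f K kappa c u n ->
  exists m j, [/\ (0 < m <= n)%N, (j < kappa m)%N & z = c m j].
Proof.
move=> hk; elim: n z => [//|n IH] z /=.
rewrite mem_rcons inE => /orP[/eqP ->|].
  set cs := [seq c n.+1 j | j <- iota 0 (kappa n.+1)].
  have : select (fun y => Phi dist f K y (zs dist f K kappa c u n)) cs (u n.+1) \in cs.
    by apply: select_mem; rewrite -size_eq0 size_map size_iota -lt0n hk.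
  move=> /mapP[j]; rewrite mem_iota add0n => hj ->.
  exists n.+1, j; split => //; first by rewrite leqnn.
move=> /IH [m [j [/andP[m0 mn] hj ->]]]; exists m, j; split => //.
by rewrite m0 (leq_trans mn).
Qed.

Lemma zs_mono K kappa c u m n z : (m <= n)%N ->
  z \in zs dist f K kappa c u m -> z \in zs dist f K kappa c u n.
Proof.
elim: n => [|n IH]; first by rewrite leqn0 => /eqP ->.
rewrite leq_eqVlt => /orP[/eqP -> //|]; rewrite ltnS => h zm.
by rewrite /= mem_rcons inE (IH h zm) orbT.
Qed.

Lemma min_attained (g : X -> R) (s : seq X) : s != [::] ->
  exists2 z, z \in s & all (fun z' => g z <= g z') s.
Proof.
elim: s => [//|a s IH] _.
case: (eqVneq s [::]) => [->|sn].
  by exists a; rewrite ?mem_head //= lexx.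
have [z zs hz] := IH sn.
case: (leP (g a) (g z)) => h.
  exists a; rewrite ?mem_head //= lexx /=.
  by apply/allP => y ys; apply: (le_trans h); exact: (allP hz).
exists z; rewrite ?inE ?zs ?orbT //= (ltW h) /=.
exact: hz.
Qed.

Lemma nn_pred_spec (x : X) (Z : seq X) (w : R) : Z != [::] ->
  exists2 z, z \in Z & nn_pred dist f x Z w = f z /\
     forall z', z' \in Z -> dist x z <= dist x z'.
Proof.
move=> Zn; rewrite /nn_pred.
set L := [seq z <- Z | all (fun z' => dist x z <= dist x z') Z].
have Ln : L != [::].
  have [z zin hz] := @min_attained (dist x) Z Zn.
  apply/eqP => h; have : z \in L by rewrite mem_filter zin hz.
  by rewrite h.
have := @pick_tie_mem _ point w L Ln; rewrite mem_filter => /andP[ha hin].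
exists (pick_tie point w L) => //; split => // z' /(allP ha); done.
Qed.

End det.
Lemma prod_bound (R : realType) (a : nat -> R) m N :
  (forall n, 0 <= a n <= 1) ->
  (\prod_(m <= n < N) (1 - a n)) * (1 + \sum_(m <= n < N) a n) <= 1.
Proof.
move=> ha; elim: N => [|N IH].
  by rewrite !big_geq // mulr1 addr0.
case: (leqP m N) => hmN; last by rewrite !big_geq // mulr1 addr0.
rewrite big_nat_recr //= big_nat_recr //=.
set Q := \prod_(m <= i < N) (1 - a i) in IH *.
set S := \sum_(m <= i < N) a i in IH *.
have Q0 : 0 <= Q by apply: prodr_ge0 => i _; have := ha i; lra.
have S0 : 0 <= S by apply: sumr_ge0 => i _; have := ha i; lra.
have := ha N => /andP[h0 h1].
have e : Q * (1 - a N) * (1 + (S + a N)) = Q * (1 + S) - Q * a N * S - Q * a N ^+ 2 by ring.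
rewrite e.
have : 0 <= Q * a N * S by rewrite mulr_ge0 // mulr_ge0.
have : 0 <= Q * a N ^+ 2 by rewrite mulr_ge0 // sqr_ge0.
lra.
Qed.

Lemma div_partial (R : realType) (a : nat -> R) :
  (forall n, 0 <= a n) ->
  (\sum_(1 <= n <oo) (a n)%:E = +oo)%E ->
  forall M : R, exists N, M < \sum_(1 <= n < N.+1) a n.
Proof.
move=> a0 hinf M; apply/not_existsP => hN.
have hle : forall N, \sum_(1 <= n < N.+1) a n <= M.
  by move=> N; have := hN N; rewrite ltNge => /negP; rewrite negbK.
have : (\sum_(1 <= n <oo) (a n)%:E <= M%:E)%E.
  apply: lime_le.
    by apply: is_cvg_ereal_nneg_natsum => n _; rewrite lee_fin.
  exists 1%N => // -[|n] //= _.
  by rewrite sumEFin lee_fin.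
by rewrite hinf leye_eq.
Qed.

Fixpoint Gfix {T : Type} (F : nat -> set T) (N : nat) : set T :=
  if N is N'.+1 then Gfix F N' `&` F N else setT.

Lemma prod_const_E (R : realType) (I : Type) (s : seq I) (p : R) :
  (\prod_(i <- s) p%:E)%E = (p ^+ size s)%:E.
Proof.
elim: s => [|a s IH]; first by rewrite big_nil.
by rewrite big_cons IH /= exprS EFinM.
Qed.

Theorem theorem6 (R : realType) (X : pointedType) (dist : X -> X -> R)
  (mu : probability (Borel dist) R) (Y : countType) (f : X -> Y)
  (K : nat) (kappa : nat -> nat)
  (dO : measure_display) (Omega : measurableType dO) (P : probability Omega R)
  (C : nat -> nat -> Omega -> Borel dist) (U W : nat -> Omega -> R) (x : X) :
  is_metric dist ->
  (forall y : Y, measurable (f @^-1` [set y] : set (Borel dist))) ->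
  (1 < K)%N ->
  (forall n, (0 < n)%N -> (0 < kappa n)%N) ->
  (forall rho : R, 0 < rho <= 1 ->
     (\sum_(1 <= n <oo) (rho ^+ kappa n)%:E = +oo)%E) ->
  (* candidates: i.i.d. with law mu *)
  (forall n j, (0 < n)%N -> (j < kappa n)%N ->
     measurable_fun setT (C n j) /\
     forall A : set (Borel dist), measurable A -> P (C n j @^-1` A) = mu A) ->
  (* tie-breaking samples: uniform on [0,1) *)
  (forall n, (0 < n)%N ->
     measurable_fun setT (U n) /\
     forall A : set R, measurable A ->
       P (U n @^-1` A) = lebesgue_measure (A `&` [set r : R | 0 <= r < 1])) ->
  (forall n, (0 < n)%N ->
     measurable_fun setT (W n) /\
     forall A : set R, measurable A ->
       P (W n @^-1` A) = lebesgue_measure (A `&` [set r : R | 0 <= r < 1])) ->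
  (* mutual independence of all the samples *)
  (forall (s1 : seq (nat * nat)) (s2 s3 : seq nat)
     (A : nat * nat -> set (Borel dist)) (B D : nat -> set R),
     uniq s1 -> uniq s2 -> uniq s3 ->
     all (fun i => (0 < i.1)%N && (i.2 < kappa i.1)%N) s1 ->
     all (fun n => (0 < n)%N) s2 -> all (fun n => (0 < n)%N) s3 ->
     (forall i, measurable (A i)) -> (forall n, measurable (B n)) ->
     (forall n, measurable (D n)) ->
     P (\bigcap_(i in [set` s1]) (C i.1 i.2 @^-1` A i)
        `&` \bigcap_(n in [set` s2]) (U n @^-1` B n)
        `&` \bigcap_(n in [set` s3]) (W n @^-1` D n))
     = (\prod_(i <- s1) P (C i.1 i.2 @^-1` A i)
        * \prod_(n <- s2) P (U n @^-1` B n)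
        * \prod_(n <- s3) P (W n @^-1` D n))%E) ->
  (* x lies in an f-contiguous component of positive measure *)
  (exists A : set X, [/\ fcomponent dist mu f A, A x,
      measurable (A : set (Borel dist)) & (0 < mu A)%E]) ->
  {ae P, forall w : Omega, exists N : nat, forall n : nat, (N <= n)%N ->
     nn_pred dist f x (zs dist f K kappa (fun m j => C m j w) (fun m => U m w) n)
       (W n w) = f x}.
Proof.
move=> hmet hf hK hk hser hC hU hW hind [A [[[fconA suppA nbA] maxA] Ax mA muA]].
have [d0 dsym dtri] := hmet.
have xsupp : supp dist mu x := suppA x Ax.
have [e e0 He] : exists2 e : R, 0 < e &
    mu (mball dist x e `\` f @^-1` [set f x]) = 0%E.
  have nb := nbA x Ax.
  apply: contrapT => hno; apply: nb => r r0.
  rewrite lt0e measure_ge0 andbT; apply/negP => /eqP h; apply: hno; by exists r.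
have mball_m : forall y r, measurable (mball dist y r : set (Borel dist)).
  move=> y r; apply: sub_sigma_algebra => z hz.
  exists (r - dist y z); first by rewrite subr_gt0.
  move=> t; rewrite /mball /= => hzt.
  by apply: (le_lt_trans (dtri y z t)); rewrite -ltrBrDl.
set Bad : set (Borel dist) := mball dist x e `\` f @^-1` [set f x].
have mBad : measurable Bad by apply: measurableD; [exact: mball_m | exact: hf].
set B' : set (Borel dist) := mball dist x (e / 2).
have mB' : measurable B' by exact: mball_m.
have muB'0 : (0 < mu B')%E by apply: xsupp; rewrite divr_gt0.
have muB'1 : (mu B' <= 1)%E by exact: probability_le1.
have muB'fin : mu B' \is a fin_num.
  by rewrite ge0_fin_numE ?(ltW muB'0) // (le_lt_trans muB'1) // ltey.
set p := fine (mu B').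
have pE : mu B' = p%:E by rewrite fineK.
have p0 : 0 < p by rewrite -lte_fin -pE.
have p1 : p <= 1 by rewrite -lee_fin -pE.
have pre_m : forall n j, (0 < n)%N -> (j < kappa n)%N -> forall S,
    measurable S -> measurable (C n j @^-1` S).
  move=> n j hn hj S mS; rewrite -[X in measurable X]setTI.
  exact: (hC n j hn hj).1 measurableT S mS.
have pre_P : forall n j, (0 < n)%N -> (j < kappa n)%N -> forall S,
    measurable S -> P (C n j @^-1` S) = mu S.
  by move=> n j hn hj S mS; exact: (hC n j hn hj).2.
set valid := fun i : nat * nat => (0 < i.1)%N && (i.2 < kappa i.1)%N.
set Cyl := fun s : seq (nat * nat) => \bigcap_(i in [set` s]) (C i.1 i.2 @^-1` B').
have Cyl_m : forall s, all valid s -> measurable (Cyl s).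
  move=> s vs; rewrite /Cyl bigcap_seq big_seq; apply: bigsetI_measurable => i.
  by move=> /(allP vs) /andP[h1 h2]; exact: pre_m.
have Cyl_P : forall s, uniq s -> all valid s -> P (Cyl s) = (p ^+ size s)%:E.
  move=> s us vs.
  have := hind s [::] [::] (fun _ => B') (fun _ => setT) (fun _ => setT) us isT isT
    vs isT isT (fun=> mB') (fun=> measurableT) (fun=> measurableT).
  rewrite !set_nil !bigcap_set0 !setIT !big_nil !mule1 => ->.
  rewrite (eq_big_seq (fun=> p%:E)) ?prod_const_E // => i /(allP vs) /andP[h1 h2].
  by rewrite pre_P.
have Cyl_cat : forall s t, Cyl (s ++ t) = Cyl s `&` Cyl t.
  by move=> s t; rewrite /Cyl !bigcap_seq big_cat.
have Cyl_nil : Cyl [::] = setT by rewrite /Cyl set_nil bigcap_set0.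
set en := fun n => [seq (n, j) | j <- iota 0 (kappa n)].
have en_uniq : forall n, uniq (en n).
  by move=> n; rewrite map_inj_uniq ?iota_uniq // => a b [].
have en_valid : forall n, (0 < n)%N -> all valid (en n).
  move=> n hn; apply/allP => i /mapP[j]; rewrite mem_iota add0n => /andP[_ hj] ->.
  by rewrite /valid /= hn.
have size_en : forall n, size (en n) = kappa n by move=> n; rewrite size_map size_iota.
set G := Gfix (fun n => ~` Cyl (en n)).
have G_m : forall N, measurable (G N).
  elim => [|N IH] /=; first exact: measurableT.
  by apply: measurableI => //; apply: measurableC; apply: Cyl_m; exact: en_valid.
have Pfin : forall S, measurable S -> (P S < +oo)%E.
  by move=> S mS; rewrite (le_lt_trans (probability_le1 P mS)) // ltey.
have PD : forall S T, measurable S -> measurable T ->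
    P (S `\` T) = (P S - P (S `&` T))%E.
  by move=> S T mS mT; apply: measureD => //; exact: Pfin.
have claim : forall N s, uniq s -> all valid s -> all (fun i => (N < i.1)%N) s ->
    P (Cyl s `&` G N) = (p ^+ size s * \prod_(1 <= n < N.+1) (1 - p ^+ kappa n))%:E.
  elim => [|N IH] s us vs gs.
    by rewrite /= setIT Cyl_P // big_geq // mulr1.
  have e1 : Cyl s `&` G N.+1 = (Cyl s `&` G N) `\` Cyl (en N.+1).
    by rewrite /= setIA setDE.
  have mCs := Cyl_m s vs.
  have men := Cyl_m _ (en_valid N.+1 isT).
  rewrite e1 PD //; last exact: measurableI.
  have e2 : (Cyl s `&` G N) `&` Cyl (en N.+1) = Cyl (s ++ en N.+1) `&` G N.
    by rewrite Cyl_cat setIAC.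
  have gs' : all (fun i => (N < i.1)%N) s.
    by apply: sub_all gs => i /ltnW.
  have us' : uniq (s ++ en N.+1).
    rewrite cat_uniq us en_uniq andbT; apply/hasPn => i /mapP[j _ ->].
    by apply/negP => /(allP gs) /=; rewrite ltnn.
  have vs' : all valid (s ++ en N.+1) by rewrite all_cat vs en_valid.
  have gs2 : all (fun i => (N < i.1)%N) (s ++ en N.+1).
    rewrite all_cat gs' /=; apply/allP => i /mapP[j _ ->] /=; exact: ltnSn.
  rewrite e2 (IH s) // (IH (s ++ en N.+1)) // -EFinB; congr EFin.
  rewrite size_cat size_en exprD [in RHS]big_nat_recr //=; ring.
set E' := fun n => if (0 < n)%N then ~` Cyl (en n) else setT.
set never := \bigcap_n E' n.
have never_m : measurable never.
  apply: bigcapT_measurable => n; rewrite /E'; case: ifP => hn //.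
  by apply: measurableC; apply: Cyl_m; exact: en_valid.
have never_G : forall N, never `<=` G N.
  elim => [|N IH] w hw //=; split; first exact: IH.
  by have := hw N.+1 I.
set a := fun n => p ^+ kappa n.
have a01 : forall n, 0 <= a n <= 1.
  by move=> n; rewrite /a exprn_ge0 ?exprn_ile1 // ltW.
have Pnever : P never = 0%E.
  have hle : forall N, (P never <= (\prod_(1 <= n < N.+1) (1 - a n))%:E)%E.
    move=> N; have := claim N [::] isT isT isT.
    rewrite Cyl_nil setTI /= expr0 mul1r => <-.
    by rewrite le_measure ?inE //; exact: never_G.
  have nfin : P never \is a fin_num.
    by rewrite ge0_fin_numE ?measure_ge0 // Pfin.
  set r := fine (P never).
  have rE : P never = r%:E by rewrite fineK.
  have r0 : 0 <= r by rewrite -lee_fin -rE measure_ge0.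
  rewrite rE; congr EFin; apply/eqP; rewrite eq_le r0 andbT.
  rewrite leNgt; apply/negP => rpos.
  have hp : 0 < p <= 1 by rewrite p0 p1.
  have [N hN] := @div_partial R a (fun n => (andP (a01 n)).1) (hser p hp) (2 / r).
  have := hle N; rewrite rE lee_fin => hrQ.
  have := @prod_bound R a 1 N.+1 a01.
  set Q := \prod_(1 <= n < N.+1) (1 - a n) in hrQ *.
  set S := \sum_(1 <= n < N.+1) a n in hN *.
  have S0 : 0 <= S by apply: sumr_ge0 => i _; exact: (andP (a01 i)).1.
  have h2 : r * (2 / r) = 2 by field; rewrite gt_eqF.
  have h3 : r * (2 / r) < r * S by rewrite ltr_pM2l.
  have h4 : 0 <= (Q - r) * (1 + S) by rewrite mulr_ge0 // ?subr_ge0 // addr_ge0.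
  nra.
set F := fun n j => if (0 < n)%N && (j < kappa n)%N then C n j @^-1` Bad else set0.
set bad := \bigcup_n \bigcup_j F n j.
have nbad : P.-negligible bad.
  apply: negligible_bigcup => n; apply: negligible_bigcup => j.
  rewrite /F; case: ifP => [/andP[hn hj]|_]; last exact: negligible_set0.
  by apply/negligibleP; [exact: pre_m | exact: (etrans (pre_P n j hn hj Bad mBad) He)].
have nnever : P.-negligible never by apply/negligibleP.
apply: (negligibleS _ (negligibleU nnever nbad)).
move=> w; rewrite /setC /= => hQ.
apply: contrapT.
move=> hnot.
apply: hQ.
have nnw : ~ never w by move=> h; apply: hnot; left.
have nbw : ~ bad w by move=> h; apply: hnot; right.
have [n0 hn0] : exists n, ~ E' n w.
  by apply/existsNP => hall; apply: nnw => n _; exact: hall n.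
move: hn0; rewrite /E'; case: ifP => hn0 hcyl; last by exfalso; apply: hcyl.
have {hcyl} hcyl : Cyl (en n0) w by apply: contrapT.
have inB : forall j, (j < kappa n0)%N -> B' (C n0 j w).
  move=> j hj; apply: (hcyl (n0, j)) => /=.
  by apply/mapP; exists j => //; rewrite mem_iota add0n.
have good : forall m j, (0 < m)%N -> (j < kappa m)%N -> mball dist x e (C m j w) ->
    f (C m j w) = f x.
  move=> m j hm hj hb; apply: contrapT => hne; apply: nbw.
  exists m => //; exists j => //; rewrite /F hm hj /=; split => //.
case: n0 hn0 hcyl inB => [//|m0] _ _ inB.
exists m0.+1 => n hn.
set c := fun m j => C m j w.
set z0 := select (fun y => Phi dist f K y (zs dist f K kappa c (fun m => U m w) m0))
   [seq c m0.+1 j | j <- iota 0 (kappa m0.+1)] (U m0.+1 w).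
have z0in : z0 \in zs dist f K kappa c (fun m => U m w) n.
  by apply: (@zs_mono _ _ dist _ f _ _ _ _ _ _ _ hn); rewrite /= mem_rcons mem_head.
have z0B : B' z0.
  have : z0 \in [seq c m0.+1 j | j <- iota 0 (kappa m0.+1)].
    by apply: select_mem; rewrite -size_eq0 size_map size_iota -lt0n hk.
  by move=> /mapP[j]; rewrite mem_iota add0n => /andP[_ hj] ->; exact: inB.
have Zn : zs dist f K kappa c (fun m => U m w) n != [::].
  by apply/eqP => h; move: z0in; rewrite h.
have [z zin [-> hz]] := @nn_pred_spec _ _ dist _ f x _ (W n w) Zn.
have [m [j [/andP[hm _] hj ez]]] := @zs_cand _ _ dist _ f _ _ _ _ _ _ hk zin.
subst z.
apply: good => //.
rewrite /mball /=; have := hz _ z0in; rewrite /c => h1; apply: (le_lt_trans h1).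
move: z0B; rewrite /B' /mball /= => h; apply: (lt_trans h).
by rewrite ltr_pdivrMr // ltr_pMr // ltr1n.
Qed.
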